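(* Let $(\mathcal{X},\mathcal{F},\mu)$ be a probability space, let $(\mathcal{M},\mathfrak{M})$ be a measurable space, and let $f\colon \mathcal{X}\times\mathcal{X}\to\mathcal{M}$ be a measurable function. Assume $f$ is antisymmetric in the following sense: there is a measurable map $i\colon\mathcal{M}\to\mathcal{M}$ with $i(i(m))=m$ for every $m\in\mathcal{M}$ and $f(x,y)=i(f(y,x))$ for all $x,y\in\mathcal{X}$. Let $X$ and $Y$ be independent random variables with law $\mu$ and put $F=f(X,Y)$. (1) If $F$ and $Y$ are independent, then $X$ and $F$ are also independent; hence $X$, $Y$, $F$ are pairwise independent. (2) If $X$ and $F$ are independent, then $F$ and $Y$ are also independent; hence $X$, $Y$, $F$ are pairwise independent. Moreover, whenever $X,Y,F$ are pairwise independent (in particular in cases (1) and (2)), the following hold: (Hex$'$) for every balanced decomposition $(\mu_0,\mu_1)$ of $\mu$, if for $i=0,1$ the pair $(X_i,Y_i)$ consists of independent random variables each of law $\mu_i$ and $F_i=f(X_i,Y_i)$, then $F_0$ and $F_1$ have the same distribution on $\mathcal{M}$; (Hex$''$) for any two balanced decompositions $(\mu_0,\mu_1)$ and $(\nu_0,\nu_1)$ of $\mu$, if for $i=0,1$, $X_i$ has law $\mu_i$, $Y_i$ has law $\nu_i$, $X_i$ and $Y_i$ are independent, and $F_i=f(X_i,Y_i)$, then $F_0$ and $F_1$ have the same distribution on $\mathcal{M}$.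
   Context: A balanced decomposition of a probability measure $\mu$ is a pair $(\mu_0,\mu_1)$ of probability measures on the same space such that $\mu_0+\mu_1=2\mu$. Random variables $X,Y,F$ are pairwise independent if each of the pairs $(X,Y)$, $(X,F)$, $(Y,F)$ is independent. *)

(* Defs.v *)
From HB Require Import structures.
From mathcomp Require Import all_boot all_order all_algebra.
From mathcomp Require Import all_classical all_reals all_analysis.
Set Implicit Arguments. Unset Strict Implicit. Unset Printing Implicit Defensive.
Import Order.TTheory GRing.Theory Num.Theory.
Local Open Scope classical_set_scope.
Local Open Scope ring_scope.
Local Open Scope ereal_scope.

Definition indep2 (R : realType) (d : measure_display) (O : measurableType d)
  (P : probability O R) (d1 d2 : measure_display)
  (T1 : measurableType d1) (T2 : measurableType d2)
  (X : O -> T1) (Y : O -> T2) : Prop :=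
  forall A B, measurable A -> measurable B ->
    P (X @^-1` A `&` Y @^-1` B) = P (X @^-1` A) * P (Y @^-1` B).

Definition pairwise_indep3 (R : realType) (d : measure_display)
  (O : measurableType d) (P : probability O R)
  (d1 d2 d3 : measure_display) (T1 : measurableType d1)
  (T2 : measurableType d2) (T3 : measurableType d3)
  (X : O -> T1) (Y : O -> T2) (F : O -> T3) : Prop :=
  [/\ indep2 P X Y, indep2 P X F & indep2 P Y F].

Definition has_law (R : realType) (d : measure_display) (O : measurableType d)
  (P : probability O R) (d1 : measure_display) (T : measurableType d1)
  (X : O -> T) (mu : probability T R) : Prop :=
  forall A, measurable A -> P (X @^-1` A) = mu A.

Definition same_law (R : realType) (e0 e1 : measure_display)
  (O0 : measurableType e0) (O1 : measurableType e1)
  (P0 : probability O0 R) (P1 : probability O1 R)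
  (d : measure_display) (M : measurableType d)
  (F0 : O0 -> M) (F1 : O1 -> M) : Prop :=
  forall B, measurable B -> P0 (F0 @^-1` B) = P1 (F1 @^-1` B).

Definition balanced_decomp (R : realType) (d : measure_display)
  (T : measurableType d) (mu mu0 mu1 : probability T R) : Prop :=
  forall A, measurable A -> mu0 A + mu1 A = 2%:E * mu A.

(* Main.v *)
Require Import Defs.
From HB Require Import structures.
From mathcomp Require Import all_boot all_order all_algebra.
From mathcomp Require Import all_classical all_reals all_analysis.
From mathcomp Require Import measurable_realfun.
Import Order.TTheory GRing.Theory Num.Theory.
Import numFieldNormedType.Exports.
Local Open Scope classical_set_scope.
Local Open Scope ring_scope.
Local Open Scope ereal_scope.
Set Implicit Arguments. Unset Strict Implicit. Unset Printing Implicit Defensive.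

Lemma joint_law (R : realType) (d : measure_display) (T : measurableType d)
  (m1 m2 : probability T R) (dO : measure_display) (O : measurableType dO)
  (P : probability O R) (X Y : {mfun O >-> T}) :
  has_law P X m1 -> has_law P Y m2 -> indep2 P X Y ->
  forall E, measurable E -> P ((fun w => (X w, Y w)) @^-1` E) = (m1 \x m2) E.
Proof.
move=> hX hY hXY E mE.
have mXY : measurable_fun setT (fun w => (X w, Y w)).
  by apply: measurable_fun_pair; exact: measurable_funP.
rewrite (@product_measure_unique _ _ _ _ _ m1 m2 (pushforward P (fun w => (X w, Y w))))//.
move=> A B mA mB; rewrite /pushforward; have := hXY A B mA mB; rewrite hX// hY// => <-.
Qed.

Lemma indep2C (R : realType) (dO : measure_display) (O : measurableType dO)
  (P : probability O R) (d1 d2 : measure_display)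
  (T1 : measurableType d1) (T2 : measurableType d2) (X : O -> T1) (Y : O -> T2) :
  indep2 P X Y -> indep2 P Y X.
Proof. by move=> h A B mA mB; rewrite setIC h// muleC. Qed.

Section Main.
Variables (R : realType) (d : measure_display)
  (T : measurableType d) (mu : probability T R)
  (dM : measure_display) (M : measurableType dM)
  (f : T * T -> M) (i : M -> M)
  (mf : measurable_fun [set: T * T] f) (mi : measurable_fun [set: M] i)
  (ii : forall m, i (i m) = m)
  (fanti : forall x y, f (x, y) = i (f (y, x))).

Lemma mpre B : measurable B -> measurable (f @^-1` B).
Proof. by move=> mB; rewrite -[f @^-1` B]setTI; exact: mf. Qed.

Lemma mipre B : measurable B -> measurable (i @^-1` B).
Proof. by move=> mB; rewrite -[i @^-1` B]setTI; exact: mi. Qed.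

Variables (dO : measure_display) (O : measurableType dO) (P : probability O R)
     (X Y : {mfun O >-> T}).
Hypotheses (hX : has_law P X mu) (hY : has_law P Y mu) (hXY : indep2 P X Y).

Let F := fun w => f (X w, Y w).

Lemma swapP E : measurable E ->
  P ((fun w => (X w, Y w)) @^-1` E) = P ((fun w => (Y w, X w)) @^-1` E).
Proof.
move=> mE; rewrite (joint_law hX hY hXY)// (joint_law hY hX (indep2C hXY))//.
Qed.

Lemma keyA A B : measurable A -> measurable B ->
  P (X @^-1` A `&` F @^-1` B) = P (Y @^-1` A `&` F @^-1` (i @^-1` B)).
Proof.
move=> mA mB.
have mE : measurable ((A `*` setT) `&` f @^-1` B).
  by apply: measurableI; [exact: measurableX|exact: mpre].
have := swapP mE.
have -> : (fun w => (X w, Y w)) @^-1` ((A `*` setT) `&` f @^-1` B) = X @^-1` A `&` F @^-1` B.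
  by apply/seteqP; split => w /=; [move=> [[? _] ?]|move=> [? ?]].
move=> ->; congr (P _); apply/seteqP; split => w /=.
- by move=> [[? _] h]; split => //; rewrite /F -fanti.
- by move=> [? h]; split => //; rewrite fanti.
Qed.

Lemma keyB B : measurable B -> P (F @^-1` B) = P (F @^-1` (i @^-1` B)).
Proof.
move=> mB; have := swapP (mpre mB).
have -> : (fun w => (X w, Y w)) @^-1` (f @^-1` B) = F @^-1` B by [].
move=> ->; congr (P _); apply/seteqP; split => w /=.
- by rewrite /F fanti.
- by rewrite /F -fanti.
Qed.

Lemma iiB B : i @^-1` (i @^-1` B) = B.
Proof. by apply/seteqP; split => m /=; rewrite ii. Qed.

Lemma part1 : indep2 P F Y -> indep2 P X F /\ pairwise_indep3 P X Y F.
Proof.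
move=> hFY.
have hXF : indep2 P X F.
  move=> A B mA mB; rewrite keyA// setIC hFY//; last exact: mipre.
  by rewrite -keyB// hX// -hY// muleC.
by split => //; split => //; exact: indep2C.
Qed.

Lemma part2 : indep2 P X F -> indep2 P F Y /\ pairwise_indep3 P X Y F.
Proof.
move=> hXF.
have hFY : indep2 P F Y.
  move=> B A mB mA; rewrite setIC; have := keyA mA (mipre mB); rewrite iiB => <-.
  by rewrite hXF//; [rewrite -keyB// hX// -hY// muleC | exact: mipre].
by split => //; split => //; exact: indep2C.
Qed.


Lemma prodE12 (m1 m2 : probability T R) S : measurable S ->
  (m1 \x m2) S = (m1 \x^ m2) S.
Proof. by move=> mS; apply: product_measure_unique => // A B mA mB; exact: product_measure2E. Qed.

Lemma transfer (nu : probability T R) (h : T -> \bar R) (k : \bar R) :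
  (forall A, measurable A -> nu A <= 2%:E * mu A) ->
  measurable_fun setT h -> ae_eq mu setT h (cst k) -> \int[nu]_x h x = k.
Proof.
move=> le mh [N [mN muN sub]].
have nuN : nu N = 0.
  by apply/eqP; rewrite eq_le measure_ge0 andbT; have := le N mN; rewrite muN mule0.
rewrite (ae_eq_integral (cst k))//. rewrite integral_cst//; rewrite -[RHS]mule1; congr (_ * _).
  exact: probability_setT.
by exists N.
Qed.

Section Hex.
Variables (B : set M) (mB : measurable B).
Hypotheses (hXF : indep2 P X F) (hYF : indep2 P Y F).
Let E := f @^-1` B.
Let mE : measurable E := mpre mB.
Let c := (mu \x mu) E.
Lemma cE : P (F @^-1` B) = c. Proof. exact: (joint_law hX hY hXY mE). Qed.

Lemma psi_ae : ae_eq mu setT (fun x => mu (xsection E x)) (cst c).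
Proof.
apply: integral_ae_eq => //.
- apply: (@le_integrable _ _ _ _ _ measurableT _ (EFin \o cst 1%R)).
  + exact: measurable_fun_xsection.
  + move=> x _ /=; rewrite gee0_abs// ger0_norm//; exact: probability_le1 (measurable_xsection _ _).
  + exact: finite_measure_integrable_cst.
- move=> A _ mA; rewrite integral_cst// integral_mkcond.
  transitivity ((mu \x mu) (E `&` (A `*` setT))).
    rewrite /product_measure1 /=; apply: eq_integral => x _; rewrite patchE xsectionI.
    case: ifPn => xA /=.
      by rewrite in_xsectionX// setIT.
    by rewrite notin_xsectionX// setI0 measure0.
  rewrite -(joint_law hX hY hXY); last by apply: measurableI => //; exact: measurableX.
  have -> : (fun w => (X w, Y w)) @^-1` (E `&` (A `*` setT)) = X @^-1` A `&` F @^-1` B.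
    by apply/seteqP; split => w /=; [move=> [? [? _]]|move=> [? ?]].
  by rewrite hXF// cE hX// muleC.
Qed.

Lemma phi_ae : ae_eq mu setT (fun y => mu (ysection E y)) (cst c).
Proof.
apply: integral_ae_eq => //.
- apply: (@le_integrable _ _ _ _ _ measurableT _ (EFin \o cst 1%R)).
  + exact: measurable_fun_ysection.
  + move=> x _ /=; rewrite gee0_abs// ger0_norm//; exact: probability_le1 (measurable_ysection _ _).
  + exact: finite_measure_integrable_cst.
- move=> A _ mA; rewrite integral_cst// integral_mkcond.
  transitivity ((mu \x mu) (E `&` (setT `*` A))); last first.
    rewrite -(joint_law hX hY hXY); last by apply: measurableI => //; exact: measurableX.
    have -> : (fun w => (X w, Y w)) @^-1` (E `&` (setT `*` A)) = Y @^-1` A `&` F @^-1` B.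
      by apply/seteqP; split => w /=; [move=> [? [_ ?]]|move=> [? ?]].
    by rewrite hYF// cE hY// muleC.
  rewrite prodE12; last by apply: measurableI => //; exact: measurableX.
  rewrite /product_measure2 /=; apply: eq_integral => x _; rewrite patchE ysectionI.
  case: ifPn => xA /=.
    by rewrite in_ysectionX// setIT.
  by rewrite notin_ysectionX// setI0 measure0.
Qed.

Lemma hex2 (mu0 mu1 nu0 nu1 : probability T R) :
  balanced_decomp mu mu0 mu1 -> balanced_decomp mu nu0 nu1 ->
  (mu0 \x nu0) E = (mu1 \x nu1) E.
Proof.
move=> bm bn.
have le0 (m m' : probability T R) : balanced_decomp mu m m' ->
    forall A, measurable A -> m A <= 2%:E * mu A.
  by move=> b A mA; rewrite -b// leeDl.
have le1 (m m' : probability T R) : balanced_decomp mu m m' ->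
    forall A, measurable A -> m' A <= 2%:E * mu A.
  by move=> b A mA; rewrite -b// leeDr.
have h1 : (mu0 \x nu0) E + (mu1 \x nu0) E = 2%:E * c.
  rewrite !prodE12// /product_measure2 -ge0_integralD//; [|exact: measurable_fun_ysection..].
  apply: transfer (le0 _ _ bn) _ _.
  - apply: emeasurable_funD; exact: measurable_fun_ysection.
  - apply: filterS phi_ae => y /= H _; rewrite bm; [by rewrite H| exact: measurable_ysection].
have h2 : (mu1 \x nu1) E + (mu1 \x nu0) E = 2%:E * c.
  rewrite /product_measure1 -ge0_integralD//; [|exact: measurable_fun_xsection..].
  apply: transfer (le1 _ _ bm) _ _.
  - apply: emeasurable_funD; exact: measurable_fun_xsection.
  - apply: filterS psi_ae => x /= H _; rewrite addeC bn; [by rewrite H| exact: measurable_xsection].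
have fx : (mu1 \x nu0) E \is a fin_num.
  rewrite ge0_fin_numE ?measure_ge0//; apply: le_lt_trans (probability_le1 _ mE) _; exact: ltry.
by rewrite -[LHS](addeK _ fx) h1 -h2 addeK.
Qed.

End Hex.

End Main.

Local Close Scope ereal_scope.

Theorem corollary4p1 (R : realType) (d : measure_display)
  (T : measurableType d) (mu : probability T R)
  (dM : measure_display) (M : measurableType dM)
  (f : T * T -> M) (i : M -> M)
  (mf : measurable_fun [set: T * T] f) (mi : measurable_fun [set: M] i)
  (ii : forall m, i (i m) = m)
  (fanti : forall x y, f (x, y) = i (f (y, x))) :
  (* (1) *)
  (forall (dO : measure_display) (O : measurableType dO) (P : probability O R)
     (X Y : {mfun O >-> T}),
     has_law P X mu -> has_law P Y mu -> indep2 P X Y ->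
     indep2 P (fun w => f (X w, Y w)) Y ->
     indep2 P X (fun w => f (X w, Y w)) /\
     pairwise_indep3 P X Y (fun w => f (X w, Y w))) /\
  (* (2) *)
  (forall (dO : measure_display) (O : measurableType dO) (P : probability O R)
     (X Y : {mfun O >-> T}),
     has_law P X mu -> has_law P Y mu -> indep2 P X Y ->
     indep2 P X (fun w => f (X w, Y w)) ->
     indep2 P (fun w => f (X w, Y w)) Y /\
     pairwise_indep3 P X Y (fun w => f (X w, Y w))) /\
  (* Moreover: pairwise independence implies (Hex') and (Hex'') *)
  (forall (dO : measure_display) (O : measurableType dO) (P : probability O R)
     (X Y : {mfun O >-> T}),
     has_law P X mu -> has_law P Y mu ->
     pairwise_indep3 P X Y (fun w => f (X w, Y w)) ->
     (* (Hex') *)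
     (forall (mu0 mu1 : probability T R), balanced_decomp mu mu0 mu1 ->
      forall (e0 : measure_display) (O0 : measurableType e0)
        (P0 : probability O0 R) (X0 Y0 : {mfun O0 >-> T})
        (e1 : measure_display) (O1 : measurableType e1)
        (P1 : probability O1 R) (X1 Y1 : {mfun O1 >-> T}),
        has_law P0 X0 mu0 -> has_law P0 Y0 mu0 -> indep2 P0 X0 Y0 ->
        has_law P1 X1 mu1 -> has_law P1 Y1 mu1 -> indep2 P1 X1 Y1 ->
        same_law P0 P1 (fun w => f (X0 w, Y0 w)) (fun w => f (X1 w, Y1 w))) /\
     (* (Hex'') *)
     (forall (mu0 mu1 nu0 nu1 : probability T R),
      balanced_decomp mu mu0 mu1 -> balanced_decomp mu nu0 nu1 ->
      forall (e0 : measure_display) (O0 : measurableType e0)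
        (P0 : probability O0 R) (X0 Y0 : {mfun O0 >-> T})
        (e1 : measure_display) (O1 : measurableType e1)
        (P1 : probability O1 R) (X1 Y1 : {mfun O1 >-> T}),
        has_law P0 X0 mu0 -> has_law P0 Y0 nu0 -> indep2 P0 X0 Y0 ->
        has_law P1 X1 mu1 -> has_law P1 Y1 nu1 -> indep2 P1 X1 Y1 ->
        same_law P0 P1 (fun w => f (X0 w, Y0 w)) (fun w => f (X1 w, Y1 w)))).
Proof.
split; [|split].
- move=> dO O P X Y hX hY hXY hFY; exact: (part1 mf mi fanti hX hY hXY hFY).
- move=> dO O P X Y hX hY hXY hXF; by apply: (part2 mf mi _ fanti hX hY hXY hXF).
- move=> dO O P X Y hX hY [hXY hXF hYF].
  have H : forall (mu0 mu1 nu0 nu1 : probability T R),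
      balanced_decomp mu mu0 mu1 -> balanced_decomp mu nu0 nu1 ->
      forall (e0 : measure_display) (O0 : measurableType e0)
        (P0 : probability O0 R) (X0 Y0 : {mfun O0 >-> T})
        (e1 : measure_display) (O1 : measurableType e1)
        (P1 : probability O1 R) (X1 Y1 : {mfun O1 >-> T}),
        has_law P0 X0 mu0 -> has_law P0 Y0 nu0 -> indep2 P0 X0 Y0 ->
        has_law P1 X1 mu1 -> has_law P1 Y1 nu1 -> indep2 P1 X1 Y1 ->
        same_law P0 P1 (fun w => f (X0 w, Y0 w)) (fun w => f (X1 w, Y1 w)).
    move=> mu0 mu1 nu0 nu1 bm bn e0 O0 P0 X0 Y0 e1 O1 P1 X1 Y1 h0X h0Y h0 h1X h1Y h1 B mB.
    rewrite [LHS](joint_law h0X h0Y h0 (mpre mf mB)) [RHS](joint_law h1X h1Y h1 (mpre mf mB)).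
    exact: (hex2 mf hX hY hXY mB hXF hYF bm bn).
  split; last exact: H.
  move=> mu0 mu1 bm e0 O0 P0 X0 Y0 e1 O1 P1 X1 Y1; exact: H.
Qed.
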